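(* Under the full-support assumption, the constant $C_{\bm P}$ is strictly positive; more precisely, there is a constant $c>0$ depending only on $\bm P$ such that $\|\bm P{\bm\pi}\|_\infty\ge c\,\|{\bm\pi}-p({\bm\pi})\|_1$ for every ${\bm\pi}\in\Delta(\mathbb{A})$ with all entries positive.
   Context: $\mathbb{A}$ is a finite set, $\Delta(\mathbb{A})$ the probability simplex, $\bm P\in\mathbb{R}^{\mathbb{A}\times\mathbb{A}}$ skew-symmetric. $\mathbb{M}$ is the set of Nash equilibria: ${\bm\pi}\in\Delta(\mathbb{A})$ with $\max_a(\bm P{\bm\pi})_a\le 0$. Full-support assumption: for every $a$ there exists ${\bm\pi}\in\mathbb{M}$ with $\pi_a>0$. For ${\bm\pi}$ with positive entries, $p({\bm\pi})=\arg\min_{{\bm\pi}'\in\mathbb{M}}D_{\mathrm{KL}}({\bm\pi}'\|{\bm\pi})$ (unique). $C_{\bm P}=\inf\{\|\bm P{\bm\pi}\|_\infty/\|{\bm\pi}-p({\bm\pi})\|_1:\ {\bm\pi}\in\Delta(\mathbb{A})\setminus\mathbb{M},\ \pi_a>0\ \forall a\}$. *)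

(* Defs.v *)
From HB Require Import structures.
From mathcomp Require Import all_boot all_order all_algebra.
From mathcomp Require Import reals exp.
Set Implicit Arguments. Unset Strict Implicit. Unset Printing Implicit Defensive.
Import Order.TTheory GRing.Theory Num.Theory.
Local Open Scope ring_scope.

Section Defs.
Variables (R : realType) (A : finType).

Definition matvec (P : A -> A -> R) (pi : A -> R) (a : A) : R :=
  \sum_(b : A) P a b * pi b.

Definition skew_symmetric (P : A -> A -> R) : Prop :=
  forall a b, P a b = - P b a.

Definition simplex (pi : A -> R) : Prop :=
  (forall a, 0 <= pi a) /\ \sum_(a : A) pi a = 1.

Definition nash (P : A -> A -> R) (pi : A -> R) : Prop :=
  simplex pi /\ forall a, matvec P pi a <= 0.

Definition full_support (P : A -> A -> R) : Prop :=
  forall a, exists pi, nash P pi /\ 0 < pi a.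

Definition KL (q pi : A -> R) : R :=
  \sum_(a : A) (if q a == 0 then 0 else q a * ln (q a / pi a)).

(* q is a KL projection of pi onto the Nash set M, i.e. q = p(pi) *)
Definition is_KL_proj (P : A -> A -> R) (pi q : A -> R) : Prop :=
  nash P q /\ forall q', nash P q' -> KL q pi <= KL q' pi.

Definition norm1 (x : A -> R) : R := \sum_(a : A) `|x a|.
Definition normInf (x : A -> R) : R := \big[Num.max/0]_(a : A) `|x a|.

End Defs.

(* Main.v *)
Require Import Defs.
From HB Require Import structures.
From mathcomp Require Import all_boot all_order all_algebra.
From mathcomp Require Import reals exp.
From mathcomp Require Import sequences.
From mathcomp Require Import ring lra.
From Stdlib Require Import Classical.
Import Order.TTheory GRing.Theory Num.Theory.
Set Implicit Arguments. Unset Strict Implicit.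
Local Open Scope ring_scope.

Lemma dual_mx (F : fieldType) m n (G : 'M[F]_(m, n)) (w : 'rV[F]_n) :
  (forall v : 'rV[F]_n, G *m v^T = 0 -> v *m w^T = 0) -> (w <= G)%MS.
Proof.
move=> H.
set K := kermx G^T.
have KG : K *m G^T = 0 := mulmx_ker _.
have Kw : K *m w^T = 0.
  apply/row_matrixP => i; rewrite row_mul row0; apply: H.
  by rewrite -[G]trmxK -trmx_mul -row_mul KG row0 trmx0.
have w1 : (w <= kermx K^T)%MS.
  by apply/sub_kermxP; rewrite -(trmxK w) -trmx_mul Kw trmx0.
have G1 : (G <= kermx K^T)%MS.
  by apply/sub_kermxP; rewrite -(trmxK G) -trmx_mul KG trmx0.
have rk : \rank (kermx K^T) = \rank G.
  by rewrite mxrank_ker mxrank_tr /K mxrank_ker mxrank_tr subKn // rank_leq_col.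
have [_] := mxrank_leqif_sup G1.
rewrite rk eqxx => /esym h.
exact: submx_trans w1 h.
Qed.

Lemma sum_ev (R : realFieldType) (A : finType) (F : A -> R) :
  \sum_(i < #|A|) F (enum_val i) = \sum_a F a.
Proof.
rewrite [RHS](reindex (enum_val : 'I_#|A| -> A)) //=.
exists enum_rank => [i _|a _]; [exact: enum_valK | exact: enum_rankK].
Qed.

Section S.
Variable R : realType.
Lemma ln_le_sub1 (y : R) : 0 < y -> ln y <= y - 1.
Proof.
move=> y0; have h := @le_ln1Dx R (y - 1).
have e : 1 + (y - 1) = y by ring.
rewrite e in h; apply: h; lra.
Qed.
Lemma key_ineq (q x p : R) : 0 < q -> 0 < x -> 0 < p ->
  x * ln (x / p) - q * ln (q / p) <=
  (x - q) + (x - q) ^+ 2 / q + (x - q) * ln (q / p).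
Proof.
move=> q0 x0 p0.
have -> : x / p = (x / q) * (q / p) by field; lra.
rewrite lnM ?posrE ?divr_gt0 //.
have h : x * ln (x / q) <= (x - q) + (x - q) ^+ 2 / q.
  have := ln_le_sub1 (divr_gt0 x0 q0) => hl.
  have -> : (x - q) + (x - q) ^+ 2 / q = x * (x / q - 1) by field; lra.
  by rewrite ler_wpM2l // ltW.
set L := ln (q / p); set M := ln (x / q) in h *.
have -> : x * (M + L) - q * L = x * M + (x - q) * L by ring.
lra.
Qed.

Lemma fin_min (T : finType) (K : T -> R -> Prop) :
  (forall t c c', 0 < c' -> c' <= c -> K t c -> K t c') ->
  (forall t, exists2 c, 0 < c & K t c) -> exists2 c, 0 < c & forall t, K t c.
Proof.
move=> Kmon Kex.
suff [c c0 hc] : exists2 c, 0 < c & forall t, t \in enum T -> K t c.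
  by exists c => // t; apply: hc; rewrite mem_enum.
elim: (enum T) => [|t l [c c0 hc]]; first by exists 1.
have [c1 c10 hc1] := Kex t.
exists (Num.min c c1); first by rewrite lt_min c0 c10.
move=> u; rewrite inE => /orP [/eqP -> | ul].
  by apply: (Kmon _ c1) => //; [rewrite lt_min c0 c10 | rewrite ge_min lexx orbT].
by apply: (Kmon _ c) => //; [rewrite lt_min c0 c10 | rewrite ge_min lexx | apply: hc].
Qed.

Variable A : finType.
Variable P : A -> A -> R.

Lemma matvec_lin (x y : A -> R) al be a :
  matvec P (fun b => al * x b + be * y b) a = al * matvec P x a + be * matvec P y a.
Proof.
rewrite /matvec !mulr_sumr -big_split /=; apply: eq_bigr => b _; ring.
Qed.

Lemma sum_lin (x y : A -> R) al be :
  \sum_a (al * x a + be * y a) = al * \sum_a x a + be * \sum_a y a.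
Proof. by rewrite big_split /= -!mulr_sumr. Qed.

Lemma nash_conv x y s : nash P x -> nash P y -> 0 <= s <= 1 ->
  nash P (fun a => (1 - s) * x a + s * y a).
Proof.
move=> [[x0 x1] xP] [[y0 y1] yP] /andP [s0 s1]; split; first split.
- move=> a; have := x0 a; have := y0 a => ha hb.
  nra.
- by rewrite sum_lin x1 y1; ring.
- move=> a; rewrite matvec_lin.
  have := xP a; have := yP a => ha hb.
  nra.
Qed.

Lemma exists_full (a0 : A) : full_support P ->
  exists y, nash P y /\ forall a, 0 < y a.
Proof.
move=> fs.
suff [y [ny hy]] : exists y, nash P y /\ forall a, a \in enum A -> 0 < y a.
  by exists y; split => // a; apply: hy; rewrite mem_enum.
elim: (enum A) => [|t l [y [ny hy]]].
  by have [y [ny _]] := fs a0; exists y.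
have [z [nz zt]] := fs t.
exists (fun a => (1 - 2^-1) * y a + 2^-1 * z a); split.
  by apply: nash_conv => //; apply/andP; split; lra.
have [[y0 _] _] := ny; have [[z0 _] _] := nz.
move=> u; rewrite inE => /orP [/eqP -> | ul].
  have := y0 t; lra.
have := hy u ul; have := z0 u; lra.
Qed.

Lemma nash_ker y q : skew_symmetric P -> nash P y -> (forall a, 0 < y a) ->
  nash P q -> forall a, matvec P q a = 0.
Proof.
move=> sk [[y0 _] yP] ypos [[q0 _] qP].
pose S := \sum_a y a * matvec P q a.
have e : S = - \sum_b q b * matvec P y b.
  rewrite /S /matvec.
  under eq_bigr => a _ do rewrite mulr_sumr.
  rewrite exchange_big /= -sumrN; apply: eq_bigr => b _.
  rewrite mulr_sumr -sumrN; apply: eq_bigr => a _; rewrite (sk a b); ring.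
have Sle : S <= 0.
  rewrite /S -oppr_ge0 -sumrN; apply: sumr_ge0 => a _.
  have := qP a; have := ypos a => h1 h2.
  rewrite oppr_ge0; apply: mulr_ge0_le0 => //; lra.
have Sge : 0 <= S.
  rewrite e oppr_ge0; apply: sumr_le0 => b _; apply: mulr_ge0_le0 => //.
have S0 : \sum_a - (y a * matvec P q a) = 0.
  by rewrite sumrN -/S; apply/eqP; rewrite oppr_eq0 eq_le Sle Sge.
have H0 : forall i, true -> 0 <= - (y i * matvec P q i).
  move=> i _; have := qP i; have := ypos i => h1 h2; nra.
move=> a; have := psumr_eq0P H0 S0 (i:=a) isT.
move=> /eqP; rewrite oppr_eq0 mulf_eq0 => /orP [|/eqP //].
by rewrite gt_eqF.
Qed.


Lemma term_pos (qb yb pb s : R) : 0 < qb -> 0 < pb -> 0 < s <= 1 ->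
  0 < (1 - s) * qb + s * yb ->
  ((1 - s) * qb + s * yb) * ln (((1 - s) * qb + s * yb) / pb) - qb * ln (qb / pb)
  <= s * (yb - qb) + s * ((yb - qb) * ln (qb / pb) + (yb - qb) ^+ 2 / qb).
Proof.
move=> q0 p0 /andP [s0 s1] x0.
have := key_ineq q0 x0 p0.
set x := (1 - s) * qb + s * yb.
have e1 : x - qb = s * (yb - qb) by rewrite /x; ring.
have e2 : (x - qb) ^+ 2 / qb = s ^+ 2 * ((yb - qb) ^+ 2 / qb) by rewrite e1; field; lra.
rewrite e2 e1.
have T0 : 0 <= (yb - qb) ^+ 2 / qb by apply: divr_ge0; [apply: sqr_ge0 | lra].
set T := (yb - qb) ^+ 2 / qb in T0 *.
set L := ln (qb / pb).
set LHS := _ - _.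
move=> h.
have : s ^+ 2 * T <= s * T.
  rewrite expr2; have : 0 <= s * (1 - s) * T.
    by apply: mulr_ge0 => //; apply: mulr_ge0; lra.
  lra.
lra.
Qed.

Lemma term_zero (yb pb s : R) : 0 < yb -> 0 < pb -> 0 < s ->
  ((1 - s) * 0 + s * yb) * ln (((1 - s) * 0 + s * yb) / pb)
  = s * (yb - 0) + s * (yb * (ln (yb / pb) - 1)) + s * ln s * yb.
Proof.
move=> y0 p0 s0.
have -> : (1 - s) * 0 + s * yb = s * yb by ring.
have e : ln (s * yb / pb) = ln s + ln (yb / pb).
  by rewrite -mulrA lnM ?posrE ?divr_gt0.
rewrite e; ring.
Qed.

Lemma proj_pos pi q : full_support P -> skew_symmetric P ->
  (forall a, 0 < pi a) -> is_KL_proj P pi q -> forall a, 0 < q a.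
Proof.
move=> fs sk pipos [nq qmin] a.
have [y [ny ypos]] := exists_full a fs.
have [[q0 q1] qP] := nq; have [[y0 y1] yP] := ny.
rewrite lt_def q0 andbT; apply/eqP => qa0.
pose Z b := if q b == 0 then y b else 0.
pose Y := \sum_b Z b.
have Y0 : 0 < Y.
  rewrite /Y (bigD1 a) //=; have -> : Z a = y a by rewrite /Z (introT eqP qa0).
  have : 0 <= \sum_(b | b != a) Z b.
    by apply: sumr_ge0 => b _; rewrite /Z; case: ifP => _ //; exact: ltW.
  have := ypos a; lra.
pose E b := if q b == 0 then y b * (ln (y b / pi b) - 1)
            else (y b - q b) * ln (q b / pi b) + (y b - q b) ^+ 2 / q b.
pose B := \sum_b `|E b|.
pose s := expR (- (B / Y) - 1).
have s0 : 0 < s := expR_gt0 _.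
have B0 : 0 <= B by apply: sumr_ge0 => b _; exact: normr_ge0.
have BY0 : 0 <= B / Y by apply: divr_ge0 => //; exact: ltW.
have s1 : s < 1 by rewrite /s expR_lt1; lra.
have lns : ln s = - (B / Y) - 1 by rewrite /s expRK.
pose x b := (1 - s) * q b + s * y b.
have xpos : forall b, 0 < x b.
  move=> b; rewrite /x; have := q0 b; have := ypos b => h1 h2.
  have : 0 <= (1 - s) * q b by apply: mulr_ge0 => //; lra.
  have : 0 < s * y b by apply: mulr_gt0.
  lra.
have nx : nash P x by apply: nash_conv => //; apply/andP; split; lra.
have hle := qmin x nx.
have Kx : KL x pi = \sum_b x b * ln (x b / pi b).
  by apply: eq_bigr => b _; rewrite (gt_eqF (xpos b)).
have bound : KL x pi - KL q pi <=
    \sum_b (s * (y b - q b) + s * E b + s * ln s * Z b).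
  rewrite Kx /KL -sumrB; apply: ler_sum => b _.
  rewrite /E /Z /x; have [hq|hq] := eqVneq (q b) 0.
    by rewrite hq subr0 term_zero.
  rewrite mulr0 addr0.
  apply: term_pos => //; last by have := xpos b; rewrite /x.
    by rewrite lt_def hq q0.
  by apply/andP; split; lra.
have e1 : \sum_b (s * (y b - q b) + s * E b + s * ln s * Z b)
        = s * (\sum_b y b - \sum_b q b) + s * \sum_b E b + s * ln s * Y.
  by rewrite !big_split /= -!mulr_sumr sumrB.
have EB : \sum_b E b <= B by apply: ler_sum => b _; exact: ler_norm.
rewrite e1 y1 q1 lns in bound.
have : s * \sum_b E b <= s * B by rewrite ler_wpM2l //; exact: ltW.
have e2 : s * (- (B / Y) - 1) * Y = - (s * B) - s * Y by field; rewrite gt_eqF.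
have : 0 < s * Y by apply: mulr_gt0.
lra.
Qed.

Lemma proj_orth pi q v : (forall a, 0 < pi a) -> is_KL_proj P pi q ->
  (forall a, 0 < q a) -> (forall a, matvec P v a = 0) -> \sum_a v a = 0 ->
  0 <= \sum_a v a * ln (q a / pi a).
Proof.
move=> pipos [nq qmin] qpos vP v0.
have [[q0 q1] qP] := nq.
have [s0 s00 hs0] : exists2 c, 0 < c & forall a, c <= q a / (`|v a| + 1).
  apply: (fin_min (K := fun a c => c <= q a / (`|v a| + 1))).
    by move=> t c c' _ h1 h2; apply: le_trans h2.
  move=> a; exists (q a / (`|v a| + 1)) => //.
  by apply: divr_gt0 => //; have := normr_ge0 (v a); lra.
pose K := \sum_a v a ^+ 2 / q a.
have K0 : 0 <= K.
  by apply: sumr_ge0 => a _; apply: divr_ge0; [exact: sqr_ge0 | exact: ltW].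
set G := \sum_a v a * ln (q a / pi a).
rewrite leNgt; apply/negP => G0.
pose t := - G / (2 * (K + 1)).
have t0 : 0 < t by apply: divr_gt0; lra.
have tK : t * (2 * (K + 1)) = - G by rewrite /t; field; lra.
pose s := Num.min s0 t.
have s0p : 0 < s by rewrite lt_min s00 t0.
have ss0 : s <= s0 by rewrite ge_min lexx.
have st : s <= t by rewrite ge_min lexx orbT.
pose x b := 1 * q b + s * v b.
have xpos : forall b, 0 < x b.
  move=> b; rewrite /x; have := hs0 b; have := qpos b.
  have := normr_ge0 (v b); have hn := ler_norm (- v b); rewrite normrN in hn.
  move=> h1 h2 h3.
  have h7 : 0 < `|v b| + 1 by lra.
  have h6 : s * (`|v b| + 1) <= q b.
    rewrite -ler_pdivlMr //; exact: le_trans ss0 h3.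
  have : s * - v b <= s * `|v b| by rewrite ler_wpM2l //; exact: ltW.
  lra.
have nx : nash P x.
  split; first split.
  - by move=> b; exact: ltW.
  - by rewrite sum_lin q1 v0; ring.
  - by move=> b; rewrite matvec_lin vP mulr0 addr0 mul1r.
have hle := qmin x nx.
have Kx : KL x pi = \sum_b x b * ln (x b / pi b).
  by apply: eq_bigr => b _; rewrite (gt_eqF (xpos b)).
have Kq : KL q pi = \sum_b q b * ln (q b / pi b).
  by apply: eq_bigr => b _; rewrite (gt_eqF (qpos b)).
have bound : KL x pi - KL q pi <=
    \sum_b (s * v b + s ^+ 2 * (v b ^+ 2 / q b) + s * (v b * ln (q b / pi b))).
  rewrite Kx Kq -sumrB; apply: ler_sum => b _.
  have := key_ineq (qpos b) (xpos b) (pipos b).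
  have e : x b - q b = s * v b by rewrite /x; ring.
  rewrite e.
  have -> : (s * v b) ^+ 2 / q b = s ^+ 2 * (v b ^+ 2 / q b).
    by field; rewrite gt_eqF.
  move=> h; lra.
rewrite !big_split /= -!mulr_sumr v0 -/K -/G in bound.
have : s * K <= t * K by rewrite ler_wpM2r.
have : s * (G + s * K) < 0.
  rewrite pmulr_rlt0 //.
  have : t * K <= t * (K + 1) by rewrite ler_wpM2l; lra.
  have : s * K <= t * K by rewrite ler_wpM2r.
  lra.
have e3 : s * (G + s * K) = s * G + s ^+ 2 * K by rewrite expr2; ring.
lra.
Qed.

Lemma duality (w : A -> R) :
  (forall v : A -> R, (forall a, matvec P v a = 0) -> \sum_a v a = 0 ->
     \sum_a v a * w a = 0) ->
  exists (mu : A -> R) (t : R), forall a, w a = \sum_b mu b * P b a + t.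
Proof.
move=> H.
pose n := #|A|.
pose G : 'M[R]_(n + 1, n) :=
  col_mx (\matrix_(i < n, j < n) P (enum_val i) (enum_val j)) (const_mx 1).
pose wr : 'rV[R]_n := \row_j w (enum_val j).
have : (wr <= G)%MS.
  apply: dual_mx => v Gv.
  pose vf a := v 0 (enum_rank a).
  have h1 : forall a, matvec P vf a = 0.
    move=> a.
    have e : (G *m v^T) (lshift 1 (enum_rank a)) 0 = matvec P vf a.
      rewrite mxE /matvec -[RHS]sum_ev; apply: eq_bigr => j _.
      by rewrite /vf enum_valK col_mxEu !mxE enum_rankK.
    by rewrite -e Gv mxE.
  have h2 : \sum_a vf a = 0.
    have e : (G *m v^T) (rshift n 0) 0 = \sum_a vf a.
      rewrite mxE -[RHS]sum_ev; apply: eq_bigr => j _.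
      by rewrite /vf enum_valK col_mxEd !mxE mul1r.
    by rewrite -e Gv mxE.
  have h3 := H vf h1 h2.
  apply/matrixP => i j; rewrite (ord1 i) (ord1 j) !mxE -[RHS]h3 -[RHS]sum_ev.
  by apply: eq_bigr => k _; rewrite /vf enum_valK !mxE.
move=> /submxP [D eD].
exists (fun b => D 0 (lshift 1 (enum_rank b))), (D 0 (rshift n 0)) => a.
have e1 : w a = wr 0 (enum_rank a) by rewrite mxE enum_rankK.
rewrite e1 eD mxE big_split_ord /= big_ord1 col_mxEd mxE mulr1.
congr (_ + _); rewrite -[RHS]sum_ev; apply: eq_bigr => i _.
by rewrite col_mxEu !mxE enum_rankK enum_valK.
Qed.

Lemma normInf_ge (x : A -> R) b : `|x b| <= normInf x.
Proof. by rewrite /normInf (bigD1 b) //= le_max lexx. Qed.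

Lemma normInf_ge0 (x : A -> R) : 0 <= normInf x.
Proof. rewrite /normInf; elim/big_rec: _ => // i y _ h; by rewrite le_max h orbT. Qed.

Definition pat (z : A -> R) : {set A} * {set A} :=
  ([set a | 0 < z a], [set a | z a < 0]).

Definition adm (p : {set A} * {set A}) :=
  exists (z mu : A -> R) (t : R), pat z = p /\ forall a, z a = matvec P mu a + t.

Definition good (p : {set A} * {set A}) (c : R) :=
  adm p -> exists (z mu : A -> R) (t : R), [/\ pat z = p,
     forall a, z a = matvec P mu a + t &
     forall a, z a != 0 -> c * (\sum_b `|mu b| + 1) <= `|z a|].

Lemma good_all : exists2 c, 0 < c & forall p, good p c.
Proof.
apply: fin_min.
  move=> p c c' c'0 c'c hg /hg [z [mu [t [h1 h2 h3]]]].
  exists z, mu, t; split => // a /h3; apply: le_trans.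
  rewrite ler_wpM2r //; apply: addr_ge0 => //; apply: sumr_ge0 => b _.
  exact: normr_ge0.
move=> p; case: (classic (adm p)) => [[z [mu [t [h1 h2]]]] | nadm]; last first.
  by exists 1 => // /nadm.
set S := \sum_b `|mu b|.
have S0 : 0 <= S by apply: sumr_ge0 => b _; exact: normr_ge0.
have S1 : 0 < S + 1 by lra.
have [c c0 hc] : exists2 c, 0 < c & forall a, z a != 0 -> c * (S + 1) <= `|z a|.
  apply: (fin_min (K := fun a (c : R) => z a != 0 -> c * (S + 1) <= `|z a|)).
    move=> a c c' c'0 c'c h /h; apply: le_trans.
    by rewrite ler_wpM2r //; lra.
  move=> a; case: (eqVneq (z a) 0) => [za|za].
    by exists 1 => //; rewrite za eqxx.
  exists (`|z a| / (S + 1)).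
    by apply: divr_gt0; [rewrite normr_gt0 | lra].
  by move=> _; rewrite divfK // gt_eqF.
by exists c => // _; exists z, mu, t; split.
Qed.

End S.

Theorem mainTheorem7 (R : realType) (A : finType) (P : A -> A -> R) :
  skew_symmetric P -> full_support P ->
  exists c : R, 0 < c /\
    forall pi : A -> R, simplex pi -> (forall a, 0 < pi a) ->
      forall q : A -> R, is_KL_proj P pi q ->
        c * norm1 (fun a => pi a - q a) <= normInf (matvec P pi).
Proof.
move=> sk fs.
have [c c0 hc] := @good_all R A P.
exists c; split => // pi [pi0 pi1] pipos q hq.
have qpos := proj_pos fs sk pipos hq.
have [nq _] := hq.
have [[q0 q1] qP] := nq.
have Pq : forall a, matvec P q a = 0.
  move=> a; have [y [ny ypos]] := exists_full a fs.
  exact: nash_ker sk ny ypos nq a.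
pose w a := ln (q a / pi a).
have orth : forall v : A -> R, (forall a, matvec P v a = 0) -> \sum_a v a = 0 ->
    \sum_a v a * w a = 0.
  move=> v vP v0.
  have h1 := proj_orth pipos hq qpos vP v0.
  have vP' : forall a, matvec P (fun b => - v b) a = 0.
    move=> a; have := vP a; rewrite /matvec => h.
    have e : \sum_b P a b * - v b = - \sum_b P a b * v b.
      by rewrite -sumrN; apply: eq_bigr => b _; ring.
    by rewrite e h oppr0.
  have v0' : \sum_a - v a = 0 by rewrite sumrN v0 oppr0.
  have h2 := proj_orth pipos hq qpos vP' v0'.
  have e : \sum_a - v a * ln (q a / pi a) = - \sum_a v a * ln (q a / pi a).
    by rewrite -sumrN; apply: eq_bigr => a _; ring.
  rewrite e in h2; rewrite /w; lra.
have [mu0 [t0 hw]] := duality orth.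
have adm_w : adm P (pat w).
  exists w, (fun b => - mu0 b), t0; split => // a.
  rewrite hw /matvec; congr (_ + _); apply: eq_bigr => b _; rewrite (sk a b); ring.
have [z [mu [t [pz hz hzb]]]] := hc _ adm_w.
set S := \sum_b `|mu b|.
have S0 : 0 <= S by apply: sumr_ge0 => b _; exact: normr_ge0.
have S1 : 0 < S + 1 by lra.
set C := c * (S + 1).
have key : forall a, C * `|pi a - q a| <= (q a - pi a) * z a.
  move=> a.
  have ez1 : (0 < z a) = (0 < w a).
    by have := congr1 (fun p : {set A} * {set A} => a \in p.1) pz; rewrite /pat /= !inE.
  have ez2 : (z a < 0) = (w a < 0).
    by have := congr1 (fun p : {set A} * {set A} => a \in p.2) pz; rewrite /pat /= !inE.
  clear pz; have pa := pipos a; have qa := qpos a.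
  case: (ltgtP (q a) (pi a)) => hqp.
  - have wa : w a < 0.
      rewrite /w ln_lt0 //; apply/andP; split; first exact: divr_gt0.
      by rewrite ltr_pdivrMr // mul1r.
    have za : z a < 0 by rewrite ez2.
    have := hzb a (negbT (lt_eqF za)); rewrite ltr0_norm // gtr0_norm; last lra.
    rewrite -/S -/C => h; have : 0 <= (- z a - C) * (pi a - q a) by apply: mulr_ge0; lra.
    lra.
  - have wa : 0 < w a.
      by rewrite /w ln_gt0 // ltr_pdivlMr // mul1r.
    have za : 0 < z a by rewrite ez1.
    have := hzb a (negbT (gt_eqF za)); rewrite gtr0_norm // ltr0_norm; last lra.
    rewrite -/S -/C => h; have : 0 <= (z a - C) * (q a - pi a) by apply: mulr_ge0; lra.
    lra.
  - by rewrite hqp subrr normr0 mulr0 mul0r.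

have hsum : C * norm1 (fun a => pi a - q a) <= \sum_a (q a - pi a) * z a.
  rewrite /norm1 mulr_sumr; apply: ler_sum => a _; exact: key.
have hrhs : \sum_a (q a - pi a) * z a = \sum_b mu b * matvec P pi b.
  have e1 : forall a, (q a - pi a) * z a =
      \sum_b ((q a - pi a) * P a b * mu b) + (q a - pi a) * t.
    move=> a; rewrite hz mulrDr /matvec mulr_sumr; congr (_ + _).
    by apply: eq_bigr => b _; ring.
  under eq_bigr => a _ do rewrite e1.
  rewrite big_split /= exchange_big /= -mulr_suml sumrB q1 pi1 subrr mul0r addr0.
  apply: eq_bigr => b _.
  have e : mu b * matvec P pi b = mu b * (matvec P pi b - matvec P q b).
    by rewrite Pq subr0.
  rewrite e /matvec -sumrB mulr_sumr; apply: eq_bigr => a _; rewrite (sk a b); ring.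
have N0 := normInf_ge0 (matvec P pi).
have hbound : \sum_b mu b * matvec P pi b <= S * normInf (matvec P pi).
  rewrite /S mulr_suml; apply: ler_sum => b _.
  have h := normInf_ge (matvec P pi) b.
  apply: le_trans (ler_norm _) _; rewrite normrM.
  by apply: ler_wpM2l => //; exact: normr_ge0.
rewrite -(ler_pM2l S1).
set n1 := norm1 _ in hsum *.
set N := normInf _ in N0 hbound *.
rewrite hrhs in hsum.
have eC : C * n1 = (S + 1) * (c * n1) by rewrite /C; ring.
lra.
Qed.
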